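(* Let $(X,* )$ be a proto unital shelf or an idempotent semi-group, and let $a,b\in X$. Then $a*b=b*a$ if and only if $a*b*a=b*a*b$.
   Context: A shelf is a set with a binary operation $*$ satisfying $(a*b)*c=(a*c)*(b*c)$ for all $a,b,c$. A proto unital shelf is a shelf satisfying $a*b=b*(a*b)$ and $a*b=(a*b)*b$ for all $a,b$; such shelves are associative. An idempotent semi-group is an associative magma with $a*a=a$ for all $a$. *)

(* Defs.v *)
Definition is_shelf {X : Type} (op : X -> X -> X) : Prop :=
  forall a b c : X, op (op a b) c = op (op a c) (op b c).

Definition is_proto_unital_shelf {X : Type} (op : X -> X -> X) : Prop :=
  is_shelf op /\
  (forall a b : X, op a b = op b (op a b)) /\
  (forall a b : X, op a b = op (op a b) b).

Definition is_idempotent_semigroup {X : Type} (op : X -> X -> X) : Prop :=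
  (forall a b c : X, op (op a b) c = op a (op b c)) /\
  (forall a : X, op a a = a).

(* Main.v *)
Require Import Defs.

Lemma key (X : Type) (op : X -> X -> X) (h : is_proto_unital_shelf op) (a b : X) :
  op (op a b) a = op b a.
Proof.
  destruct h as [S [L1 L2]].
  rewrite S.
  transitivity (op (op a a) (op (op b a) a)).
  { f_equal. apply L2. }
  rewrite <- S.
  rewrite <- (L1 b a).
  symmetry; apply L2.
Qed.

Theorem proposition2p1 (X : Type) (op : X -> X -> X)
  (hX : is_proto_unital_shelf op \/ is_idempotent_semigroup op)
  (a b : X) :
  op a b = op b a <-> op (op a b) a = op (op b a) b.
Proof.
  destruct hX as [h | [A I]].
  - rewrite (key X op h a b), (key X op h b a). split; intro; symmetry; assumption.
  - split; intro H.
    + rewrite H, !A, I, H, <- A, I. reflexivity.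
    + assert (E1 : op a b = op (op a b) a).
      { transitivity (op (op a b) (op a b)). symmetry; apply I.
        rewrite A, <- (A b a b), <- H, <- A, <- A, I. reflexivity. }
      assert (E2 : op b a = op (op b a) b).
      { transitivity (op (op b a) (op b a)). symmetry; apply I.
        rewrite A, <- (A a b a), H, <- A, <- A, I. reflexivity. }
      transitivity (op (op a b) a). exact E1. rewrite H. symmetry. exact E2.
Qed.
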